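(* Let $G$ be a finite bipartite graph having a nonempty channel $C$. Then to each perfect matching $\mu$ of $G$ one can assign a nonempty set of edges $S(\mu)\subseteq E$ such that: (i) $S(\mu)$ is a simple cycle of even length; (ii) every second edge of $S(\mu)$ lies in $\mu$; (iii) $S(\mu)$ depends only on the edges of $\mu$ that contain a vertex of $C$; (iv) if $\mu'$ is a perfect matching with $S(\mu)=\mu\oplus\mu'$ (symmetric difference), then $S(\mu')=S(\mu)$.
   Context: A channel of a graph $G=(V,E)$ is a set $C\subseteq V$ such that every vertex of $G$ is adjacent to an even number of vertices of $C$. *)

(* Defs.v *)
(* A finite simple graph = symmetric irreflexive relation
   e on a finType T; an edge is the 2-element vertex set [set x; y]. *)
From mathcomp Require Import all_boot all_order.
Set Implicit Arguments. Unset Strict Implicit. Unset Printing Implicit Defensive.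

Section Graphs.
Variable T : finType.
Implicit Types (e : rel T) (C : {set T}) (M S : {set {set T}}) (p : seq T).

Definition simple_graph e : Prop := irreflexive e /\ symmetric e.

Definition edges e : {set {set T}} := [set [set u.1; u.2] | u in [set u : T * T | e u.1 u.2]].

Definition bipartite e : Prop := exists f : T -> bool, forall x y, e x y -> f x != f y.

Definition is_channel e C : Prop := forall v : T, ~~ odd #|[set u in C | e v u]|.

Definition perfect_matching e M : Prop :=
  M \subset edges e /\ forall v : T, #|[set m in M | v \in m]| = 1.

Definition cycle_edges p : {set {set T}} := [set [set x; next p x] | x in p].

Definition even_alternating_cycle e M S : Prop :=
  exists p : seq T,
    [/\ uniq p && (3 <= size p)%N, ~~ odd (size p), cycle e p,
        S = cycle_edges p &
        forall x, x \in p -> ~~ odd (index x p) -> [set x; next p x] \in M].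

Definition touching M C : {set {set T}} := [set m in M | m :&: C != set0].

Definition symdiff M S : {set {set T}} := (M :\: S) :|: (S :\: M).
End Graphs.

(* Main.v *)
Require Import Defs.
From mathcomp Require Import all_boot all_order.
From mathcomp Require Import zify.
Set Implicit Arguments. Unset Strict Implicit. Unset Printing Implicit Defensive.

Lemma rho_periodic (T : finType) (h : T -> T) x0 N : #|T| <= N ->
  exists k, iter k.+1 h (iter N h x0) = iter N h x0.
Proof.
move=> HN.
have := looping_order h x0; rewrite /looping => /trajectP [i lti Ei].
have Ho : order h x0 <= #|T| := max_card _.
exists (order h x0 - i).-1; rewrite prednK ?subn_gt0 // -iterD.
have -> : order h x0 - i + N = (N - i) + order h x0 by lia.
by rewrite iterD Ei -iterD subnK //; lia.
Qed.

Lemma rho_cycle (T : finType) (h : T -> T) x0 N : #|T| <= N ->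
  fcycle h (orbit h (iter N h x0)).
Proof. by move=> HN; apply: (all_iffLR orbitPcycle 3 0); apply: rho_periodic. Qed.

Lemma rho_back (T : finType) (h : T -> T) x0 N z : #|T| <= N ->
  fconnect h (iter N h x0) z -> fconnect h z (iter N h x0).
Proof.
move=> HN Oz; have cyc := @rho_cycle T h x0 N HN.
rewrite fconnect_orbit in Oz.
by rewrite (fconnect_cycle cyc Oz) in_orbit.
Qed.

Lemma rho_pre (T : finType) (h : T -> T) x0 N z : #|T| <= N ->
  fconnect h (iter N h x0) z -> exists2 u, fconnect h (iter N h x0) u & h u = z.
Proof.
move=> HN Oz.
have hz : fconnect h (h z) z :=
  connect_trans (rho_back HN (connect_trans Oz (fconnect1 h z))) Oz.
exists (iter (findex h (h z) z) h z).
  exact: connect_trans Oz (fconnect_iter _ _ _).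
by rewrite -iterS iterSr iter_findex.
Qed.

Lemma rho_swap (T : finType) (h h' : T -> T) x0 N : #|T| <= N ->
  (forall z, ~~ fconnect h (iter N h x0) z -> h' z = h z) ->
  (forall z, fconnect h (iter N h x0) z -> h' (h z) = z) ->
  forall z, fconnect h' (iter N h' x0) z = fconnect h (iter N h x0) z.
Proof.
move=> HN hout hin.
set y := iter N h x0.
have h'O z : fconnect h y z -> fconnect h y (h' z).
  by move=> /(rho_pre HN) [u Ou <-]; rewrite hin.
have hh' z : fconnect h y z -> h (h' z) = z.
  by move=> /(rho_pre HN) [u Ou <-]; rewrite hin.
have exP : exists i, fconnect h y (iter i h x0) by exists N; exact: connect0.
case: (ex_minnP exP) => i Pi mini.
have eq1 k : k <= i -> iter k h' x0 = iter k h x0.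
  elim: k => // k IH le; rewrite !iterS IH ?(ltnW le) //; apply: hout.
  by apply/negP => Pk; have := mini k Pk; lia.
have inO k : fconnect h y (iter (i + k) h' x0).
  elim: k => [|k IH]; first by rewrite addn0 eq1.
  by rewrite addnS iterS; apply: h'O.
have iN : i <= N by apply: mini; exact: connect0.
have y'O : fconnect h y (iter N h' x0) by rewrite -(subnKC iN); apply: inO.
set y' := iter N h' x0.
have dir1 w : fconnect h' y' w -> fconnect h y w.
  move=> /iter_findex <-; elim: (findex h' y' w) => [|j IH] //=; exact: h'O.
move=> z; apply/idP/idP; first exact: dir1.
move=> Oz; have : fconnect h y' z := connect_trans (rho_back HN y'O) Oz.
move=> /iter_findex <-; elim: (findex h y' z) => [|j IH] /=; first exact: connect0.
have [u Ou <-] := rho_pre HN IH.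
by rewrite hh' ?dir1.
Qed.


Section Conc.
Variables (T : finType) (e : rel T) (C D : {set T}) (fcol : T -> bool) (b : bool) (c0 : T).

Definition mate (N : {set {set T}}) x := odflt x [pick y | [set x; y] \in N].
Definition pairs (s : seq T) x :=
  nth x s (if odd (index x s) then (index x s).-1 else (index x s).+1).
Definition pim d x := pairs (enum [set u in D | e d u]) x.
Definition Hf N x := if x \in D then mate N x else pim (mate N (mate N x)) (mate N x).
Definition NN := #|T|.*2.
Definition Oset N := [set z | fconnect (Hf N) (iter NN (Hf N) c0) z].
Definition Sf N := [set [set z; Hf N z] | z in Oset N].

Hypothesis irr : irreflexive e.
Hypothesis sym : symmetric e.
Hypothesis Hcol : forall x y, e x y -> fcol x != fcol y.
Hypothesis HD : forall x, (x \in D) = (x \in C) && (fcol x == b).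
Hypothesis chanD : forall d, ~~ odd #|[set u in D | e d u]|.
Hypothesis c0D : c0 \in D.

Lemma NNge : #|T| <= NN. Proof. by rewrite /NN -addnn leq_addr. Qed.

Lemma DC x : x \in D -> x \in C. Proof. by rewrite HD => /andP []. Qed.

Lemma edge_e x y : [set x; y] \in edges e -> e x y.
Proof.
case/imsetP=> [[u v]]; rewrite inE /= => euv E.
have ux : u \in [set x; y] by rewrite E !inE eqxx.
have vx : v \in [set x; y] by rewrite E !inE eqxx orbT.
rewrite !inE in ux vx; move: euv.
case/orP: ux => /eqP ->; case/orP: vx => /eqP -> //; rewrite ?irr //.
by rewrite sym.
Qed.

Lemma pj_ne i : (if odd i then i.-1 else i.+1) != i.
Proof. by case: i => [|k] //=; case: (odd k) => /=; lia. Qed.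

Lemma pj_inv i : (if odd (if odd i then i.-1 else i.+1) then
   (if odd i then i.-1 else i.+1).-1 else (if odd i then i.-1 else i.+1).+1) = i.
Proof. by case: i => [|k] //=; case ok: (odd k) => /=; rewrite ?ok. Qed.

Lemma pairs_spec s x : uniq s -> ~~ odd (size s) -> x \in s ->
  [/\ pairs s x \in s, pairs s x != x & pairs s (pairs s x) = x].
Proof.
move=> us es xs; rewrite /pairs.
set i := index x s.
have lti : i < size s by rewrite index_mem.
set j := if odd i then i.-1 else i.+1.
have ltj : j < size s.
  rewrite /j; case: ifP => oi; first by lia.
  have : i.+1 != size s by apply/eqP => E; move: es; rewrite -E /= oi.
  by lia.
have ij : index (nth x s j) s = j by rewrite index_uniq.
have jni : j != i by rewrite /j; apply: pj_ne.
split; first exact: mem_nth.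
  by apply/eqP => E; move: ij; rewrite E -/i => /eqP; rewrite eq_sym (negPf jni).
rewrite ij.
have -> : (if odd j then j.-1 else j.+1) = i.
  by rewrite /j; apply: pj_inv.
by rewrite (set_nth_default x) // nth_index.
Qed.

Lemma pim_spec d x : x \in [set u in D | e d u] ->
  [/\ pim d x \in [set u in D | e d u], pim d x != x & pim d (pim d x) = x].
Proof.
move=> xin; rewrite /pim.
have := @pairs_spec (enum [set u in D | e d u]) x (enum_uniq _).
by rewrite -cardE mem_enum chanD xin => /(_ isT isT) [a b' c]; rewrite mem_enum in a.
Qed.

Section Match.
Variable M : {set {set T}}.
Hypothesis pmM : perfect_matching e M.
Let N := touching M C.

Lemma uniqM m1 m2 v : m1 \in M -> m2 \in M -> v \in m1 -> v \in m2 -> m1 = m2.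
Proof.
case: pmM => _ /(_ v) /eqP /cards1P [a Ea] m1M m2M v1 v2.
have : m1 \in [set m in M | v \in m] by rewrite inE m1M.
have : m2 \in [set m in M | v \in m] by rewrite inE m2M.
by rewrite Ea !inE => /eqP -> /eqP ->.
Qed.

Lemma NM m : m \in N -> m \in M. Proof. by rewrite inE => /andP []. Qed.

Lemma touchE x y : x \in C -> ([set x; y] \in N) = ([set x; y] \in M).
Proof.
move=> xC; rewrite inE; case: (_ \in M) => //=.
by apply/set0Pn; exists x; rewrite !inE eqxx.
Qed.

Lemma edgeN x y : [set x; y] \in N -> e x y.
Proof. by move=> /NM; case: pmM => /subsetP sub _ /sub; apply: edge_e. Qed.

Lemma mate_eq x y : [set x; y] \in N -> mate N x = y.
Proof.
move=> xyN; rewrite /mate; case: pickP => [z xzN | /(_ y)]; last by rewrite xyN.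
have E := uniqM (NM xzN) (NM xyN) (setU11 _ _) (setU11 _ _).
have : z \in [set x; y] by rewrite -E !inE eqxx orbT.
rewrite !inE => /orP [/eqP zx | /eqP //].
by have := edgeN xzN; rewrite zx irr.
Qed.

Lemma mate_ex c : c \in C -> [set c; mate N c] \in N.
Proof.
move=> cC; case: pmM => /subsetP sub /(_ c) /eqP /cards1P [m Em].
have : m \in [set m in M | c \in m] by rewrite Em inE.
rewrite inE => /andP [mM cm].
have /imsetP [[u v] _ Em'] := sub _ mM.
rewrite Em' !inE /= in cm.
have [y Ey] : exists y, m = [set c; y].
  by case/orP: cm => /eqP ->; [exists v | exists u; rewrite setUC].
suff cyN : [set c; y] \in N by rewrite (mate_eq cyN).
by rewrite touchE // -Ey.
Qed.

Lemma mate_ne x : mate N x != x -> [set x; mate N x] \in N.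
Proof.
by rewrite /mate; case: pickP => [z xzN _ | _] /=; [rewrite xzN | rewrite eqxx].
Qed.

Lemma e_mate c : c \in D -> e c (mate N c).
Proof. by move=> cD; apply: edgeN; apply: mate_ex; apply: DC. Qed.

Lemma mate_mate c : c \in D -> mate N (mate N c) = c.
Proof. by move=> cD; apply: mate_eq; rewrite setUC; apply: mate_ex; apply: DC. Qed.

Lemma col_mate c : c \in D -> fcol (mate N c) = ~~ b.
Proof.
move=> cD; have := Hcol (e_mate cD); move: cD; rewrite HD => /andP [_ /eqP ->].
by case: b; case: (fcol _).
Qed.

Lemma mate_notD c : c \in D -> mate N c \notin D.
Proof. by move=> cD; rewrite HD col_mate //; case: b; rewrite andbF. Qed.

Lemma H_D c : c \in D -> Hf N c = mate N c.
Proof. by rewrite /Hf => ->. Qed.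

Lemma H_mate c : c \in D -> Hf N (mate N c) = pim (mate N c) c.
Proof. by move=> cD; rewrite /Hf (negPf (mate_notD cD)) (mate_mate cD). Qed.

Lemma inP_mate c : c \in D -> c \in [set u in D | e (mate N c) u].
Proof. by move=> cD; rewrite inE cD sym e_mate. Qed.

Definition W x := (x \in D) || [exists c in D, mate N c == x].

Lemma WP x : W x -> x \in D \/ exists2 c, c \in D & x = mate N c.
Proof.
case/orP => [->|/existsP [c /andP [cD /eqP <-]]]; first by left.
by right; exists c.
Qed.

Lemma W_H x : W x -> W (Hf N x) /\ e x (Hf N x).
Proof.
case/WP => [xD | [c cD ->]].
  rewrite H_D //; split; last exact: e_mate.
  by apply/orP; right; apply/existsP; exists x; rewrite xD eqxx.
rewrite H_mate //; have [pin _ _] := pim_spec (inP_mate cD).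
rewrite inE in pin; case/andP: pin => pD epi; split => //.
by rewrite /W pD.
Qed.

Lemma col_H x : W x -> fcol (Hf N x) = ~~ fcol x.
Proof. by move=> /W_H [_ /Hcol]; case: (fcol x); case: (fcol _). Qed.

Lemma W_iter n : W (iter n (Hf N) c0).
Proof. by elim: n => [|n IH] /=; [rewrite /W c0D | case: (W_H IH)]. Qed.

Lemma col_iter n : fcol (iter n (Hf N) c0) = b (+) odd n.
Proof.
elim: n => [|n IH] /=; first by move: c0D; rewrite HD addbF => /andP [_ /eqP].
by rewrite col_H ?W_iter // IH addbN.
Qed.

Lemma W_col x : W x -> fcol x = b -> x \in D.
Proof.
case/WP => [// | [c cD ->]]; rewrite col_mate //; by case: b.
Qed.

Let y := iter NN (Hf N) c0.

Lemma OsetE z : (z \in Oset N) = (z \in orbit (Hf N) y).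
Proof. by rewrite inE fconnect_orbit. Qed.

Lemma iter_y k : iter k (Hf N) y = iter (k + NN) (Hf N) c0.
Proof. by rewrite iterD. Qed.

Lemma O_W z : z \in Oset N -> W z.
Proof. by rewrite inE => /iter_findex <-; rewrite iter_y W_iter. Qed.

Lemma O_H z : z \in Oset N -> Hf N z \in Oset N.
Proof. by rewrite !inE => Oz; apply: connect_trans Oz (fconnect1 _ _). Qed.

Lemma yD : y \in D.
Proof. by apply: W_col; rewrite ?W_iter // col_iter /NN odd_double addbF. Qed.

Lemma part1 : Sf N != set0 /\ Sf N \subset edges e /\ even_alternating_cycle e M (Sf N).
Proof.
have cyc : fcycle (Hf N) (orbit (Hf N) y) := @rho_cycle T (Hf N) c0 NN NNge.
set p := orbit (Hf N) y.
have nextE x : x \in p -> next p x = Hf N x.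
  by move=> xp; have := next_cycle cyc xp => /eqP.
have yO : y \in Oset N by rewrite OsetE in_orbit.
split.
  by apply/set0Pn; exists [set y; Hf N y]; apply/imsetP; exists y.
split.
  apply/subsetP => m /imsetP [z Oz ->]; apply/imsetP; exists (z, Hf N z) => //.
  by rewrite inE /=; case: (W_H (O_W Oz)).
have colk k : fcol (iter k (Hf N) y) = b (+) odd k.
  by rewrite iter_y col_iter oddD /NN odd_double addbF.
have ordy : iter (order (Hf N) y) (Hf N) y = y := all_iffLR orbitPcycle 0 4 cyc.
have evo : ~~ odd (size p).
  rewrite size_orbit; apply/negP => od.
  by have := colk (order (Hf N) y); rewrite ordy (colk 0) /= od addbT addbF; case: b.
exists p; split.
- rewrite orbit_uniq /=; move: evo; rewrite size_orbit.
  have := order_gt0 (Hf N) y.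
  have o2 : order (Hf N) y != 2.
    apply/eqP => o2; move: ordy; rewrite o2 -[iter 2 _ _]/(Hf N (Hf N y)) (H_D yD) (H_mate yD).
    by have [_ /eqP ne _] := pim_spec (inP_mate yD).
  by move: o2; case: (order _ _) => [|[|[|n]]].
- exact: evo.
- apply: (sub_in_cycle (P := fun z => z \in Oset N) _ _ cyc).
    by move=> u v Ou Ov /eqP <-; case: (W_H (O_W Ou)).
  by apply/allP => z zp /=; rewrite OsetE.
- apply/setP => m; apply/imsetP/imsetP => [[z Oz ->] | [z zp ->]].
    by exists z; rewrite -?OsetE // nextE // -OsetE.
  by exists z; rewrite ?OsetE // nextE.
- move=> x xp ev; rewrite nextE //.
  have xE : x = iter (index x p) (Hf N) y.
    have li : index x p < order (Hf N) y by rewrite -size_orbit index_mem.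
    by rewrite -(nth_traject _ li) -/(orbit _ _) -/p nth_index.
  have xD : x \in D.
    apply: W_col; first by apply: O_W; rewrite OsetE.
    by rewrite xE colk (negPf ev) addbF.
  by rewrite H_D //; apply: NM; apply: mate_ex; apply: DC.
Qed.

End Match.
Lemma part4 M M' : perfect_matching e M -> perfect_matching e M' ->
  Sf (touching M C) = symdiff M M' -> Sf (touching M' C) = Sf (touching M C).
Proof.
move=> pm pm' hS.
set N := touching M C; set N' := touching M' C.
have memS m : m \in Sf N -> m \notin M -> m \in M'.
  by rewrite hS !inE; case: (m \in M); case: (m \in M').
have memNS m : m \notin Sf N -> (m \in M') = (m \in M).
  by rewrite hS !inE; case: (m \in M); case: (m \in M').
have Sv x w : [set x; w] \in Sf N -> x \in Oset N.
  case/imsetP => z Oz E.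
  have : x \in [set z; Hf N z] by rewrite -E !inE eqxx.
  by case/set2P => -> //; exact: (O_H Oz).
have touchC x w m : x \in C -> ([set x; w] \in touching m C) = ([set x; w] \in m).
  move=> xC; rewrite inE; case: (_ \in m) => //=.
  by apply/set0Pn; exists x; rewrite !inE eqxx.
have claimA x : x \notin Oset N -> mate N' x = mate N x.
  move=> xO; rewrite /mate; congr odflt; apply: eq_pick => w /=.
  rewrite !inE memNS //; apply/negP => /Sv; exact/negP.
have claimB x : x \notin Oset N -> Hf N' x = Hf N x.
  move=> xO; rewrite /Hf (claimA x xO); case: ifP => xD //.
  have [mO | mO] := boolP (mate N x \in Oset N); last by rewrite claimA.
  exfalso.
  have mx : mate N x != x by apply/eqP => E; rewrite E in mO; rewrite mO in xO.
  have xmN := mate_ne mx.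
  case: (WP (O_W pm mO)) => [mD | [c cD Ec]].
    have E1 : mate N (mate N x) = x by apply: (mate_eq pm); rewrite setUC.
    by have := O_H mO; rewrite /Hf mD E1 (negPf xO).
  have E1 : mate N (mate N x) = x by apply: (mate_eq pm); rewrite setUC.
  have E2 : mate N (mate N x) = c by rewrite Ec (mate_mate pm cD).
  by move: xD; rewrite -E1 E2 cD.
have claimC x : x \in Oset N -> Hf N' (Hf N x) = x.
  move=> xO; have SxH : [set x; Hf N x] \in Sf N by apply/imsetP; exists x.
  case: (WP (O_W pm xO)) => [xD | [c cD Ex]]; last subst x.
    rewrite (H_D _ xD); set d := mate N x.
    have dO : d \in Oset N by rewrite /d -(H_D _ xD); apply: O_H.
    have Sd : [set d; Hf N d] \in Sf N by apply/imsetP; exists d.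
    rewrite /d (H_mate pm xD) -/d in Sd.
    have [pin pne pinv] := pim_spec (inP_mate pm xD); rewrite -/d in pin pne pinv.
    move: (pin); rewrite inE => /andP [wD _].
    have notM : [set d; pim d x] \notin M.
      apply/negP => dM.
      have : mate N d = pim d x by apply: (mate_eq pm); rewrite setUC touchC ?(DC wD) // setUC.
      by rewrite /d (mate_mate pm xD) => E; move: pne; rewrite /d -E eqxx.
    have inN' : [set d; pim d x] \in N'.
      by rewrite /N' setUC touchC ?(DC wD) // setUC; apply: memS.
    have m1 : mate N' d = pim d x := mate_eq pm' inN'.
    have m2 : mate N' (pim d x) = d by apply: (mate_eq pm'); rewrite setUC.
    by rewrite /Hf (negPf (mate_notD pm xD)) -/d m1 m2 pinv.
  rewrite (H_mate pm cD) in SxH *.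
  have [pin pne pinv] := pim_spec (inP_mate pm cD).
  move: (pin); rewrite inE => /andP [wD _].
  have notM : [set mate N c; pim (mate N c) c] \notin M.
    apply/negP => dM.
    have : mate N (mate N c) = pim (mate N c) c.
      by apply: (mate_eq pm); rewrite setUC touchC ?(DC wD) // setUC.
    by rewrite (mate_mate pm cD) => E; move: pne; rewrite -E eqxx.
  have inN' : [set mate N c; pim (mate N c) c] \in N'.
    by rewrite /N' setUC touchC ?(DC wD) // setUC; apply: memS.
  by rewrite /Hf wD; apply: (mate_eq pm'); rewrite setUC.
have eqO z : (z \in Oset N') = (z \in Oset N).
  rewrite !inE; apply: (rho_swap NNge).
    by move=> w wO; apply: claimB; rewrite inE.
  by move=> w wO; apply: claimC; rewrite inE.
apply/setP => m; apply/imsetP/imsetP => [[z Oz ->] | [z Oz ->]].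
  rewrite eqO in Oz.
  have [u Ou Eu] : exists2 u, u \in Oset N & Hf N u = z.
    by move: Oz; rewrite inE => /(rho_pre NNge) [u Ou E]; exists u; rewrite ?inE.
  by exists u => //; rewrite -Eu claimC // setUC.
exists (Hf N z); first by rewrite eqO; apply: O_H.
by rewrite claimC // setUC.
Qed.

End Conc.

Theorem theorem5p2 (T : finType) (e : rel T) (C : {set T}) :
  simple_graph e -> bipartite e -> C != set0 -> is_channel e C ->
  exists S : {set {set T}} -> {set {set T}},
    [/\ (forall mu, perfect_matching e mu ->
           S mu != set0 /\ S mu \subset edges e /\ even_alternating_cycle e mu (S mu)),
        (forall mu mu', perfect_matching e mu -> perfect_matching e mu' ->
           touching mu C = touching mu' C -> S mu = S mu') &
        (forall mu mu', perfect_matching e mu -> perfect_matching e mu' ->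
           S mu = symdiff mu mu' -> S mu' = S mu)].
Proof.
move=> [irr sym] [fcol Hcol] C0 chan.
have [c0 c0C] := set0Pn _ C0.
pose b := fcol c0.
pose D := [set x in C | fcol x == b].
have HD x : (x \in D) = (x \in C) && (fcol x == b) by rewrite inE.
have chanD d : ~~ odd #|[set u in D | e d u]|.
  case: (boolP (fcol d == b)) => db.
    suff -> : [set u in D | e d u] = set0 by rewrite cards0.
    apply/setP => u; rewrite !inE; apply/negP => /andP [/andP [_ ub] edu].
    by have := Hcol _ _ edu; rewrite (eqP db) (eqP ub) eqxx.
  suff -> : [set u in D | e d u] = [set u in C | e d u] by exact: chan.
  apply/setP => u; rewrite !inE; case: (u \in C); case edu: (e d u); rewrite ?andbF ?andbT //=.
  move: (Hcol _ _ edu) db; rewrite /b.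
  by case: (fcol u); case: (fcol d); case: (fcol c0).
have c0D : c0 \in D by rewrite HD c0C eqxx.
apply: (ex_intro _ (fun mu => Sf e D c0 (touching mu C))); split.
- by move=> mu pm; exact: (part1 irr sym Hcol HD chanD c0D pm).
- by move=> mu mu' _ _ ->.
- by move=> mu mu' pm pm'; exact: (part4 irr sym Hcol HD chanD c0D pm pm').
Qed.
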